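(* If $\mathcal{I}$ is an unboring ideal, then the ordinal $\omega^2+1$ with the order topology is in $\mathrm{FinBW}(\mathcal{I})$.
   Context: An ideal on an infinite countable set $X$ is a family $\mathcal{I}\subseteq\mathcal{P}(X)$ closed under subsets and finite unions, containing all finite subsets, with $X\notin\mathcal{I}$. A space $X$ is in $\mathrm{FinBW}(\mathcal{I})$ if $X$ is Hausdorff and for every sequence $(x_n)_{n\in\bigcup\mathcal{I}}$ in $X$ there is $A\notin\mathcal{I}$ with $(x_n)_{n\in A}$ convergent in $X$. $\mathrm{Fin}^2$: ideal on $\omega^2$ of all $A$ with only finitely many $n$ such that $\{m:(n,m)\in A\}$ is infinite. $\mathcal{BI}$: ideal on $\omega^3$ of all $A$ for which there is $k$ with $\{(j,l):(i,j,l)\in A\}\in\mathrm{Fin}^2$ for $i<k$ and finite for $i\ge k$. $\mathcal{I}\sqsubseteq\mathcal{J}$: there is a bijection $f:\bigcup\mathcal{J}\to\bigcup\mathcal{I}$ with $f^{-1}[A]\in\mathcal{J}$ for all $A\in\mathcal{I}$. $\mathcal{I}$ is unboring if $\mathcal{BI}\not\sqsubseteq\mathcal{I}$. *)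

(* Defs.v *)
From HB Require Import structures.
From mathcomp Require Import all_boot all_order all_algebra.
From mathcomp Require Import all_classical all_reals all_analysis.
Set Implicit Arguments. Unset Strict Implicit. Unset Printing Implicit Defensive.
Import Order.TTheory.
Local Open Scope classical_set_scope.

(** Ideals on a set X (here: a type X; the set is [setT : set X]). *)
Definition is_ideal {X : Type} (I : set (set X)) : Prop :=
  [/\ (forall A B : set X, B `<=` A -> I A -> I B),
      (forall A B : set X, I A -> I B -> I (A `|` B)),
      (forall A : set X, finite_set A -> I A)
    & ~ I [set: X]].

Definition countably_infinite (X : Type) : Prop :=
  countable [set: X] /\ infinite_set [set: X].

Definition Fin2 : set (set (nat * nat)) :=
  fun A => finite_set [set n | infinite_set [set m | A (n, m)]].

(** BI on omega^3 (triples (i,j,l) are ((i,j),l)). *)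
Definition BI : set (set (nat * nat * nat)) :=
  fun A => exists k : nat, forall i : nat,
    ((i < k)%N -> Fin2 [set jl | A (i, jl.1, jl.2)]) /\
    ((k <= i)%N -> finite_set [set jl : nat * nat | A (i, jl.1, jl.2)]).

(** I ⊑ J : a bijection f : \bigcup J -> \bigcup I (i.e. Y -> X, since
    ideals contain all singletons) with f^-1[A] ∈ J for all A ∈ I. *)
Definition ideal_below {X Y : Type} (I : set (set X)) (J : set (set Y)) : Prop :=
  exists f : Y -> X, bijective f /\ forall A : set X, I A -> J (f @^-1` A).

Definition unboring {X : Type} (I : set (set X)) : Prop := ~ ideal_below BI I.

(** The subsequence (x_n)_{n in A} converges in T (indexed by the infinite
    countable set A, i.e. along the cofinite filter on A). *)
Definition subseq_converges {X : Type} {T : topologicalType} (x : X -> T) (A : set X) : Prop :=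
  exists y : T, forall U : set T, nbhs y U -> finite_set (A `&` (x @^-1` (~` U))).

Definition FinBW {X : Type} (I : set (set X)) (T : topologicalType) : Prop :=
  hausdorff_space T /\
  forall x : X -> T, exists A : set X, ~ I A /\ subseq_converges x A.

(** The ordinal omega^2 + 1 = { omega*a + b : a, b in omega } ∪ {omega^2}. *)
Inductive omega2p1 := Pt of nat & nat | Top.

Definition o2_enc (x : omega2p1) : bool * (nat * nat) :=
  match x with Pt a b => (false, (a, b)) | Top => (true, (0%N, 0%N)) end.
Definition o2_dec (p : bool * (nat * nat)) : omega2p1 :=
  if p.1 then Top else Pt p.2.1 p.2.2.
Lemma o2_encK : cancel o2_enc o2_dec. Proof. by case. Qed.

HB.instance Definition _ := Equality.copy omega2p1 (can_type o2_encK).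
HB.instance Definition _ := CanIsCountable o2_encK.

Definition o2_lex (x : omega2p1) : bool *l (nat *l nat) := o2_enc x.
Lemma o2_lexK : cancel o2_lex o2_dec. Proof. by case. Qed.

HB.instance Definition _ : Order.isPreorder Order.default_display omega2p1 :=
  @Order.PreCancelPartial.PrePcan Order.default_display omega2p1 _ _ o2_lex.
Fact o2_anti : antisymmetric (@Order.le Order.default_display omega2p1).
Proof. by move=> x y /(@Order.le_anti _ (bool *l (nat *l nat))) /(can_inj o2_lexK). Qed.
HB.instance Definition _ :=
  Order.Preorder_isPOrder.Build Order.default_display omega2p1 o2_anti.
HB.instance Definition _ :=
  Order.MonoTotal.Build Order.default_display omega2p1 (fun _ _ => erefl : o2_lex _ <= o2_lex _ = _)%O.

Lemma o2_le_Pt (a b c d : nat) :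
  (Pt a b <= Pt c d)%O = ((a < c)%N || ((a == c) && (b <= d)%N)).
Proof.
rewrite -[(Pt a b <= _)%O]/(o2_lex (Pt a b) <= o2_lex (Pt c d))%O /o2_lex /=.
rewrite (@lexi_pair _ _ _ bool (nat *l nat)) lexx /=.
rewrite (@lexi_pair _ _ _ nat nat) /=.
by rewrite !leEnat; case: ltngtP.
Qed.
Lemma o2_le_Top (x : omega2p1) : (x <= Top)%O.
Proof. by case: x. Qed.

(* Main.v *)
Require Import Defs.
From mathcomp Require Import all_boot all_order all_algebra all_classical all_analysis.
From mathcomp Require Import zify.
Import Order.TTheory.
Local Open Scope classical_set_scope.

Lemma finite_nat_bound (J : set nat) : finite_set J -> exists m, forall j, J j -> (j < m)%N.
Proof.
move=> /finite_seqP[s ->]; elim: s => [|a s [m Hm]]; first by exists 0%N.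
exists (maxn a.+1 m) => j /=; rewrite in_cons => /orP[/eqP ->|js]; first lia.
by have := Hm j js; lia.
Qed.

Lemma infinite_nat_unbounded (N : set nat) : infinite_set N -> forall k, exists j, N j /\ (k < j)%N.
Proof.
move=> Ninf k; apply: contrapT => H; apply: Ninf.
apply: (@sub_finite_set _ _ `I_k.+1); last exact: finite_II.
move=> j Nj /=; rewrite ltnNge; apply/negP => kj; apply: H; exists j; split => //.
Qed.

Lemma blocks (N : set nat) : infinite_set N -> exists beta : nat -> nat, exists e : nat -> nat,
  [/\ (forall n, N (e n)), (forall n, beta (e n) = n) & (forall j n, beta j = n -> (j <= e n)%N)].
Proof.
move=> /infinite_nat_unbounded H.
have [nx Hnx] := choice H.
pose e n := iter n.+1 nx 0%N.
have einc : forall n, (e n < e n.+1)%N by move=> n; rewrite /e iterS; case: (Hnx (iter n.+1 nx 0%N)).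
have emono : {homo e : i j / (i < j)%N >-> (i < j)%N} by apply: homo_ltn => // y x z; exact: ltn_trans.
have ege : forall n, (n <= e n)%N.
  elim=> [|n IH] //; have := einc n; lia.
have exj : forall j, exists n, (j <= e n)%N := fun j => ex_intro _ j (ege j).
exists (fun j => ex_minn (exj j)), e; split.
- by move=> n; rewrite /e iterS; case: (Hnx (iter n nx 0%N)).
- move=> n; case: ex_minnP => m Hm Hmin.
  have := Hmin n (leqnn _); rewrite leq_eqVlt => /orP[/eqP //|mn].
  by have := emono _ _ mn; rewrite ltnNge Hm.
- by move=> j n; case: ex_minnP => m Hm _ <-.
Qed.

Section Comb.
Variables (X : Type) (I : set (set X)).
Hypothesis HI : is_ideal I.

Lemma idS A B : B `<=` A -> I A -> I B.
Proof. by case: HI => h _ _ _; apply: h. Qed.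
Arguments idS [A B].
Lemma idU A B : I A -> I B -> I (A `|` B).
Proof. by case: HI => _ h _ _; apply: h. Qed.
Lemma idF A : finite_set A -> I A.
Proof. by case: HI => _ _ h _; apply: h. Qed.
Lemma idT : ~ I [set: X].
Proof. by case: HI. Qed.
Lemma id0 : I set0.
Proof. exact/idF/finite_set0. Qed.

Lemma id_bounded (v : X -> nat) (S : set X) m :
  (forall j, (j < m)%N -> I (S `&` [set x | v x = j])) -> I (S `&` [set x | (v x < m)%N]).
Proof.
elim: m => [|m IH] H.
  by apply: (idS (A:=set0)); [move=> x [_ /=]|exact: id0].
apply: (idS (A := (S `&` [set x | (v x < m)%N]) `|` (S `&` [set x | v x = m]))).
  move=> x [Sx /= vx]; rewrite ltnS leq_eqVlt in vx.
  by case/orP: vx => [/eqP e|l]; [right|left].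
by apply: idU; [apply: IH => j jm; apply: H; lia | apply: H; lia].
Qed.

Lemma pickle_fib (S : set X) (phi : X -> nat * nat) :
  (forall p, I (S `&` (phi @^-1` [set p]))) ->
  forall j, I (S `&` [set x | pickle (phi x) = j]).
Proof.
move=> H j; case: (pselect (exists x0, S x0 /\ pickle (phi x0) = j)) => [[x0 [_ Hx0]]|nx].
  apply: (idS (A := S `&` (phi @^-1` [set phi x0]))); last exact: H.
  move=> x [Sx /= px]; split => //; apply: (pcan_inj pickleK); by rewrite px Hx0.
apply: (idS (A := set0)); last exact: id0.
by move=> x [Sx px]; apply: nx; exists x.
Qed.

Lemma regroup (S : set X) (v : X -> nat) :
  ~ I S -> (forall j, I (S `&` [set x | v x = j])) ->
  (forall A, A `<=` S -> (forall j, finite_set (A `&` [set x | v x = j])) -> I A) ->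
  exists beta : nat -> nat, forall n,
    I (S `&` [set x | beta (v x) = n]) /\ infinite_set (S `&` [set x | beta (v x) = n]).
Proof.
move=> nIS Ifib W.
pose N := [set j | infinite_set (S `&` [set x | v x = j])].
have Ninf : infinite_set N.
  move=> /finite_nat_bound [M HM]; apply: nIS.
  apply: (idS (A := (S `&` [set x | (v x < M)%N]) `|` (S `&` [set x | ~~ (v x < M)%N]))).
    by move=> x Sx; case: (ltnP (v x) M) => h; [left|right]; split => //=; rewrite -leqNgt.
  apply: idU; first by apply: id_bounded.
  apply: W; first by move=> x [].
  move=> j; case: (ltnP j M) => jM.
    apply: (@sub_finite_set _ _ set0); last exact: finite_set0.
    by move=> x [[_ /= h] /= vx]; move: h; rewrite vx jM.
  have : ~ N j by move=> /HM; lia.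
  rewrite /N /= => /contrapT fin; apply: sub_finite_set fin.
  by move=> x [[Sx _] vx].
have [beta [e [eN be bl]]] := blocks _ Ninf.
exists beta => n; split.
- apply: (idS (A := S `&` [set x | (v x < (e n).+1)%N])).
    by move=> x [Sx /= bx]; split => //=; rewrite ltnS; apply: bl.
  apply: id_bounded => j _; exact: Ifib.
- apply: (@sub_infinite_set _ (S `&` [set x | v x = e n])); last exact: eN.
  by move=> x [Sx /= ->]; split => //=.
Qed.


Lemma K2 (g : X -> nat * nat) : countable [set: X] ->
  (forall p, I (g @^-1` [set p]) /\ infinite_set (g @^-1` [set p])) ->
  (forall i A, A `<=` [set x | (g x).1 = i] ->
     (forall j, finite_set (A `&` (g @^-1` [set (i, j)]))) -> I A) ->
  (forall A, (forall i, finite_set (A `&` [set x | (g x).1 = i])) -> I A) ->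
  ideal_below BI I.
Proof.
move=> cX Hfib Hb Hc.
have hb : forall p, exists h : X -> nat, set_bij (g @^-1` [set p]) [set: nat] h.
  move=> p; apply/card_set_bijP; apply: eq_card_nat; last exact: (Hfib p).2.
  by apply: sub_countable cX; apply: subset_card_le.
have [h Hh] := choice hb.
pose f x := (g x, h (g x) x).
have fs : forall y : nat * nat * nat, exists x, f x = y.
  move=> [p l]; case: (Hh p) => _ _ /(_ l Logic.I) [x /= gx <-].
  by exists x; rewrite /f gx.
have [finv Hfinv] := choice fs.
have finvK : cancel f finv.
  move=> x; have := Hfinv (f x); rewrite /f => -[E1 E2].
  rewrite E1 in E2; case: (Hh (g x)) => _ inj _.
  by apply: inj => //; rewrite inE.
exists f; split; first by exists finv.
move=> A [k Hk].
have fE : forall x, f x = ((g x).1, (g x).2, h (g x) x) by move=> x; rewrite /f -surjective_pairing.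
apply: (idS (A := (f @^-1` A `&` [set x | ((g x).1 < k)%N]) `|`
                  (f @^-1` A `&` [set x | ~~ ((g x).1 < k)%N]))).
  by move=> x Ax; case: (ltnP (g x).1 k) => h1; [left|right]; split => //=; rewrite -leqNgt.
apply: idU.
- apply: id_bounded => i ik.
  have [M HM] := finite_nat_bound _ ((Hk i).1 ik).
  apply: (idS (A := ([set x | (g x).1 = i] `&` [set x | ((g x).2 < M)%N]) `|`
                    (f @^-1` A `&` [set x | (g x).1 = i] `&` [set x | ~~ ((g x).2 < M)%N]))).
    move=> x [Ax /= gi]; case: (ltnP (g x).2 M) => h2; [left|right]; do ?split => //=.
  apply: idU.
  + apply: id_bounded => j _; apply: (idS (A := g @^-1` [set (i, j)])); last exact: (Hfib _).1.
    by move=> x [/= <- <-]; rewrite -surjective_pairing.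
  + apply: (Hb i); first by move=> x [[_ ?] _].
    move=> j; case: (ltnP j M) => jM.
      apply: (@sub_finite_set _ _ set0); last exact: finite_set0.
      by move=> x [[_ /= h2] /= gx]; move: h2; rewrite gx /= jM.
    have fin : finite_set [set l | A (i, j, l)].
      apply: contrapT => inf; have := HM j inf; lia.
    apply: (@sub_finite_set _ _ ((fun l => finv (i, j, l)) @` [set l | A (i, j, l)])); last first.
      exact: finite_image.
    move=> x [[[Ax _] _] gx]; exists (h (g x) x).
      by move: Ax; rewrite /= fE gx.
    by have := fE x; rewrite gx /= => <-; rewrite finvK.
- apply: Hc => i; case: (ltnP i k) => ik.
    apply: (@sub_finite_set _ _ set0); last exact: finite_set0.
    by move=> x [[_ /= h1] /= gx]; move: h1; rewrite gx ik.
  apply: (@sub_finite_set _ _ ((fun jl => finv (i, jl.1, jl.2)) @` [set jl : nat * nat | A (i, jl.1, jl.2)])); last first.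
    exact/finite_image/((Hk i).2 ik).
  move=> x [[Ax _] /= gx]; exists ((g x).2, h (g x) x).
    by move: Ax; rewrite /= fE gx.
  by have := fE x; rewrite -gx /= => <-; rewrite finvK.
Qed.


Lemma core (u : X -> nat * nat) : countable [set: X] ->
  (forall p, I (u @^-1` [set p])) ->
  (forall i A, A `<=` [set x | (u x).1 = i] ->
     (forall j, finite_set (A `&` (u @^-1` [set (i, j)]))) -> I A) ->
  (forall A, (forall i, finite_set (A `&` [set x | (u x).1 = i])) -> I A) ->
  ideal_below BI I.
Proof.
move=> cX Hfib Hb Hc.
pose N := [set i | ~ I [set x | (u x).1 = i]].
case: (pselect (finite_set N)) => [Nfin | Ninf].
- have [M HM] := finite_nat_bound _ Nfin.
  pose phi x := if ((u x).1 < M)%N then u x else ((u x).1, 0%N).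
  have Wphi : forall A, (forall p, finite_set (A `&` (phi @^-1` [set p]))) -> I A.
    move=> A HA.
    apply: (idS (A := (A `&` [set x | ((u x).1 < M)%N]) `|` (A `&` [set x | ~~ ((u x).1 < M)%N]))).
      by move=> x Ax; case: (ltnP (u x).1 M) => h1; [left|right]; split => //=; rewrite -leqNgt.
    apply: idU.
    + apply: id_bounded => j jM; apply: (Hb j); first by move=> x [].
      move=> b; apply: sub_finite_set (HA (j, b)).
      by move=> x [[Ax /= uj] /= ux]; split => //=; rewrite /phi uj jM.
    + apply: Hc => j; case: (ltnP j M) => jM.
        apply: (@sub_finite_set _ _ set0); last exact: finite_set0.
        by move=> x [[_ /= h1] /= ux]; move: h1; rewrite ux jM.
      apply: sub_finite_set (HA (j, 0%N)).
      move=> x [[Ax /= h1] /= ux]; split => //=.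
      by rewrite /phi (negbTE h1) ux.
  have phifib : forall p, I (setT `&` (phi @^-1` [set p])).
    move=> [j b]; case: (ltnP j M) => jM.
      apply: (idS (A := u @^-1` [set (j, b)])); last exact: Hfib.
      move=> x [_ /=]; rewrite /phi; case: ifP => // h1 [e1 _].
      by move: h1; rewrite e1 jM.
    apply: (idS (A := [set x | (u x).1 = j])).
      move=> x [_ /=]; rewrite /phi; case: ifP => _ ; first by move=> ->.
      by case.
    have : ~ N j by move=> /HM; lia.
    by rewrite /N /= => /contrapT.
  have [beta Hbeta] := @regroup setT (fun x => pickle (phi x)) idT
      (@pickle_fib setT phi phifib)
      (fun A _ HA => Wphi A (fun p => sub_finite_set
           (fun x (hx : (A `&` (phi @^-1` [set p])) x) =>
              match hx with conj h1 h2 => conj h1 (f_equal pickle h2) end) (HA (pickle p)))).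
  have hE : ([set: nat] #= [set: nat * nat])%card by rewrite card_eq_sym; exact: card_nat2.
  have [h [_ hinj hsurj]] := card_set_bijP hE.
  pose g x := h (beta (pickle (phi x))).
  have gfib : forall p, exists n, g @^-1` [set p] = [set x | beta (pickle (phi x)) = n].
    move=> p; have [n _ hn] := hsurj p Logic.I; exists n.
    apply/seteqP; split => x /=; rewrite /g; last by move=> ->.
    by rewrite -hn => /hinj; apply; rewrite inE.
  apply: (@K2 g cX).
  + move=> p; have [n ->] := gfib p; have [H1 H2] := Hbeta n; split.
      by apply: idS H1 => x ?; split.
    by apply: sub_infinite_set H2 => x [].
  + move=> i A Ai HA; apply: Wphi => p.
    apply: sub_finite_set (HA (h (beta (pickle p))).2).
    move=> x [Ax /= px]; split => //=.
    have gx : g x = h (beta (pickle p)) by rewrite /g px.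
    by rewrite -gx -(Ai x Ax); exact: surjective_pairing.
  + move=> A HA; apply: Wphi => p.
    apply: sub_finite_set (HA (h (beta (pickle p))).1).
    by move=> x [Ax /= px]; split => //=; rewrite /g px.
- have [beta [e [eN be bl]]] := blocks _ Ninf.
  pose S n := [set x | beta (u x).1 = n].
  have Wn : forall n A, A `<=` S n -> (forall p, finite_set (A `&` (u @^-1` [set p]))) -> I A.
    move=> n A AS HA.
    apply: (idS (A := A `&` [set x | ((u x).1 < (e n).+1)%N])).
      by move=> x Ax; split => //=; rewrite ltnS; apply: bl; exact: AS.
    apply: id_bounded => j _; apply: (Hb j); first by move=> x [].
    move=> b; apply: sub_finite_set (HA (j, b)).
    by move=> x [[Ax _] ux]; split.
  have reg : forall n : nat, exists beta' : nat -> nat, forall k : nat,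
     I (S n `&` [set x | beta' (pickle (u x)) = k]) /\ infinite_set (S n `&` [set x | beta' (pickle (u x)) = k]).
    move=> n; apply: (@regroup (S n) (fun x => pickle (u x))).
    + move=> ISn; apply: (eN n); by apply: idS ISn => x /= ux; rewrite /S /= ux be.
    + move=> j; apply: (@pickle_fib (S n) u) => p; by apply: idS (Hfib p) => x [].
    + move=> A AS HA; apply: (Wn n A AS) => p; apply: sub_finite_set (HA (pickle p)).
      by move=> x [Ax /= ->].
  have [B' HB'] := choice reg.
  pose g x := (beta (u x).1, B' (beta (u x).1) (pickle (u x))).
  apply: (@K2 g cX).
  + move=> [n k].
    have -> : g @^-1` [set (n, k)] = S n `&` [set x | B' n (pickle (u x)) = k].
      apply/seteqP; split => x /=; rewrite /g.
        by move=> [<- <-].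
      by case; rewrite /S /= => -> ->.
    exact: HB'.
  + move=> n A An HA; apply: (Wn n A) => [x Ax|p]; first exact: An.
    apply: sub_finite_set (HA (B' n (pickle p))).
    move=> x [Ax /= ux]; split => //=.
    by have := An x Ax; rewrite /g /= => bn; rewrite /g bn ux.
  + move=> A HA; apply: Hc => j; apply: sub_finite_set (HA (beta j)).
    by move=> x [Ax /= uj]; split => //=; rewrite /g /= uj.
Qed.

End Comb.
Lemma o2_le_TopPt c d : (Top <= Pt c d)%O = false.
Proof.
rewrite -[(Top <= _)%O]/(o2_lex Top <= o2_lex (Pt c d))%O /o2_lex /=.
by rewrite (@lexi_pair _ _ _ bool (nat *l nat)).
Qed.
Lemma nbhs_left (y : order_topology omega2p1) (U : set (order_topology omega2p1)) :
  nbhs y U -> (Pt 0 0 < y)%O ->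
  exists l : omega2p1, (l < y)%O /\ forall z : omega2p1, (l < z)%O -> (z <= y)%O -> U z.
Proof.
rewrite order_nbhs_itv => -[[lb rb] [/= oe yi] iU] Hy.
case: lb oe yi iU => [b l|b] oe yi iU.
- have Eb := itv_open_ends_lside oe; subst b.
  exists l; split.
    by move: yi; rewrite in_itv /= => /andP[].
  move=> z lz zy; apply: iU; move: yi; rewrite /= !in_itv /= lz /=.
  case: rb {oe} => [[] r|[]] /=; rewrite ?andbT //.
  + by move=> /andP[_ yr]; exact: (le_lt_trans zy yr).
  + by move=> /andP[_ yr]; exact: (le_trans zy yr).
  + by move=> /andP[].
- have Eb := itv_open_ends_linfty oe; subst b.
  exists (Pt 0 0); split => // z _ zy; apply: iU; move: yi; rewrite /= !in_itv /=.
  case: rb {oe} => [[] r|[]] /=; rewrite ?andbT //.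
  + by move=> yr; exact: (le_lt_trans zy yr).
  + by move=> yr; exact: (le_trans zy yr).
Qed.

Theorem proposition6p2 (X : Type) (I : set (set X)) :
  countably_infinite X -> is_ideal I -> unboring I ->
  FinBW I (order_topology omega2p1).
Proof.
move=> [cX _] HI unb; split; first exact: order_hausdorff.
move=> x; apply: contrapT => Hno.
have H : forall A, subseq_converges x A -> I A.
  by move=> A cA; apply: contrapT => nIA; apply: Hno; exists A; split.
apply: unb.
have [HS HU HF HT] := HI.
have F1 : forall p, I (x @^-1` [set p]).
  move=> p; apply: H; exists p => U /nbhs_singleton Up.
  apply: (@sub_finite_set _ _ set0); last exact: finite_set0.
  by move=> z [/= -> ].
have F2 : forall a A, A `<=` [set z | exists b, x z = Pt a b] ->
    (forall b, finite_set (A `&` (x @^-1` [set Pt a b]))) -> I A.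
  move=> a A AD HA; apply: H; exists (Pt a.+1 0) => U /nbhs_left [].
    by rewrite ltNge o2_le_Pt; lia.
  move=> l [ly Hl].
  case: l ly Hl => [a' b'|] ly Hl; last by move: ly; rewrite ltNge o2_le_Top.
  apply: (@sub_finite_set _ _ (\bigcup_(b in `I_b'.+1) (A `&` (x @^-1` [set Pt a b])))).
    move=> z [Az /= nU]; have [b xb] := AD z Az.
    exists b; last by split.
    rewrite /= ltnS; apply: contrapT => bb; apply: nU; apply: Hl; rewrite xb.
    - move: ly; rewrite !ltNge !o2_le_Pt; move/negP: bb; lia.
    - rewrite o2_le_Pt; lia.
  by apply: bigcup_finite => // b _; exact: HA.
have F3 : forall A, (forall a, finite_set (A `&` [set z | exists b, x z = Pt a b])) -> I A.
  move=> A HA; apply: H; exists Top => U /nbhs_left [].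
    by rewrite ltNge o2_le_TopPt.
  move=> l [ly Hl]; case: l ly Hl => [a' b'|] ly Hl; last by rewrite ltxx in ly.
  apply: (@sub_finite_set _ _ (\bigcup_(a in `I_a'.+1) (A `&` [set z | exists b, x z = Pt a b]))).
    move=> z [Az /= nU]; case E: (x z) => [a b|].
    - exists a; last by split => //; exists b.
      rewrite /= ltnS; apply: contrapT => aa; apply: nU; rewrite E; apply: Hl.
      + rewrite ltNge o2_le_Pt; move/negP: aa; lia.
      + exact: o2_le_Top.
    - by exfalso; apply: nU; rewrite E; apply: Hl => //; exact: ly.
  by apply: bigcup_finite => // a _; exact: HA.
pose u z := match x z with Pt a b => (a.+1, b) | Top => (0%N, 0%N) end.
apply: (@core X I HI u cX).
- move=> [i b]; apply: (HS _ _ _ (HU _ _ (F1 Top) (F1 (Pt i.-1 b)))).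
  move=> z; rewrite /u /=; case: (x z) => [a b0|]; last by left.
  by move=> [<- <-]; right.
- move=> [|a] A Ai HA.
    apply: (HS _ _ _ (F1 Top)) => z /Ai; rewrite /u /=; by case: (x z).
  apply: (F2 a) => [z /Ai|b].
    by rewrite /u /=; case: (x z) => // a0 b0 [->]; exists b0.
  apply: sub_finite_set (HA b) => z [Az /= xz]; split => //=.
  by rewrite /u xz.
- move=> A HA; apply: F3 => a; apply: sub_finite_set (HA a.+1).
  by move=> z [Az /= [b xz]]; split => //=; rewrite /u xz.
Qed.
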